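(* Let $q>0$, $n\ge1$, and let $(p_m)_{m\ge1}$ be the $q$-Mallows process. Then each of the following random permutations of $\{1,\dots,n\}$ is distributed as $\mu_{n,q}$: (i) $\pi(i)=p_n(n+1-i)$; (ii) $\pi(i)=n+1-p_n^{-1}(i)$; (iii) $\pi(i)=p_n^{-1}(n+1-i)$; (iv) $\pi(i)=n+1-p_n(i)$.
   Context: For $q>0$ and $n\ge1$, $\mu_{n,q}(\pi)=q^{\mathrm{inv}(\pi)}/Z_{n,q}$ on $S_n$, with $\mathrm{inv}(\pi)$ the number of pairs $i<j$ with $\pi(i)>\pi(j)$ and $Z_{n,q}$ a normalizing constant. The $q$-Mallows process is the sequence of random permutations $p_n\in S_n$ defined as follows: let $(p_n(n))_{n\ge1}$ be independent with $\mathbb{P}(p_n(n)=j)=\frac{q^{j-1}}{1+q+\dots+q^{n-1}}$ for $1\le j\le n$; $p_1$ is the unique permutation of $\{1\}$, and for $n\ge2$, $p_n$ takes the value $p_n(n)$ at $n$ and, for $1\le i\le n-1$, $p_n(i)=p_{n-1}(i)$ if $p_{n-1}(i)<p_n(n)$ and $p_n(i)=p_{n-1}(i)+1$ otherwise. *)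

(* Defs.v *)
From mathcomp Require Import all_boot all_order all_fingroup all_algebra.
Set Implicit Arguments. Unset Strict Implicit. Unset Printing Implicit Defensive.
Import Order.TTheory GRing.Theory Num.Theory.

(* Conventions: S_n is realized as 'S_n = {perm 'I_n}, with positions and
   values 0-based: {1,...,n} is shifted to {0,...,n-1}. *)

Definition inv n (pi : 'S_n) : nat :=
  #|[set ij : 'I_n * 'I_n | (ij.1 < ij.2)%N && (pi ij.2 < pi ij.1)%N]|.

Local Open Scope ring_scope.

Definition Zmallows (R : realFieldType) (q : R) n : R :=
  \sum_(s : 'S_n) q ^+ inv s.
Definition mu (R : realFieldType) (q : R) n (pi : 'S_n) : R :=
  q ^+ inv pi / Zmallows q n.

(* Given the sequence of last values
   cs = [:: c_1; ...; c_n] (c_m = p_m(m) - 1), the sequence of values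
   [:: p_n(1)-1; ...; p_n(n)-1] is obtained by iterating the insertion step:
   old values v with v < c (i.e. p_{m-1}(i) < p_m(m)) are kept, the others
   are incremented, and c is appended. *)
Definition mallows_step (acc : seq nat) (c : nat) : seq nat :=
  rcons [seq (if (v < c)%N then v else v.+1) | v <- acc] c.
Definition mallows_seq (cs : seq nat) : seq nat := foldl mallows_step [::] cs.

(* Joint law of the independent choices (p_m(m))_{m <= n}: the choice at
   step m+1 (0-based index m : 'I_n) takes the 0-based value j in {0..m}
   with probability q^j / (1 + q + ... + q^m); choice functions with some
   value j > m get weight 0. *)
Definition choice_weight (R : realFieldType) (q : R) n (c : {ffun 'I_n -> 'I_n}) : R :=
  \prod_(m : 'I_n)
     (if (c m <= m)%N then q ^+ (c m) / \sum_(k < m.+1) q ^+ k else 0).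

Definition mallows_law (R : realFieldType) (q : R) n (sigma : 'S_n) : R :=
  \sum_(c : {ffun 'I_n -> 'I_n})
     choice_weight q c *
     (mallows_seq [seq val (c m) | m <- enum 'I_n]
        == [seq val (sigma i) | i <- enum 'I_n])%:R.

(* Main.v *)
Require Import Defs.
From mathcomp Require Import all_boot all_order all_fingroup all_algebra.
From mathcomp Require Import zify.
Import Order.TTheory GRing.Theory Num.Theory.

Definition sc (s : seq nat) (m : nat) : nat := \sum_(j < m) (nth 0 s j < nth 0 s m).
Definition code (s : seq nat) : seq nat := mkseq (sc s) (size s).
Definition valid (cs : seq nat) := forall m, m < size cs -> nth 0 cs m <= m.
Definition isperm (s : seq nat) := uniq s && all (fun v => v < size s) s.

Lemma count_perm_lt a c : isperm a -> c <= size a -> count (fun v => v < c) a = c.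
Proof.
move=> /andP[ua /allP aa] cm.
have sub : {subset a <= iota 0 (size a)} by move=> x xa; rewrite mem_iota add0n aa.
have sz : size (iota 0 (size a)) <= size a by rewrite size_iota.
have [_ eqa] := uniq_min_size ua sub sz.
have /seq.permP -> := uniq_perm ua (iota_uniq 0 (size a)) eqa.
rewrite -(subnKC cm) iotaD count_cat add0n.
rewrite (@eq_in_count _ _ predT (iota 0 c)); last by move=> x; rewrite mem_iota.
rewrite count_predT size_iota (@eq_in_count _ _ pred0); last first.
  by move=> x; rewrite mem_iota /= => /andP[]; rewrite leqNgt => /negbTE.
by rewrite count_pred0 addn0.
Qed.



Lemma sum_nth_count (p : pred nat) a :
  \sum_(j < size a) p (nth 0 a j) = count p a.
Proof.
elim: a => [|x a IH]; first by rewrite big_ord0.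
by rewrite /= big_ord_recl /= IH.
Qed.

Lemma code_map (h : nat -> nat) a :
  {in a &, forall v w, (h v < h w) = (v < w)} -> code (map h a) = code a.
Proof.
move=> hm; rewrite /code size_map /mkseq; apply/eq_in_map => m.
rewrite mem_iota add0n => /andP[_ ma]; rewrite /sc; apply: eq_bigr => j _.
rewrite !(nth_map 0) ?(ltn_trans (ltn_ord j)) // hm //; apply: mem_nth => //.
exact: ltn_trans (ltn_ord j) ma.
Qed.

Lemma code_rcons s x : code (rcons s x) = rcons (code s) (count (fun v => v < x) s).
Proof.
rewrite /code size_rcons mkseqS; congr rcons.
  rewrite /mkseq; apply/eq_in_map => m; rewrite mem_iota add0n => /andP[_ ms].
  rewrite /sc; apply: eq_bigr => j _.
  by rewrite !nth_rcons ms (ltn_trans (ltn_ord j) ms).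
rewrite /sc -sum_nth_count; apply: eq_bigr => j _.
by rewrite !nth_rcons ltn_ord ltnn eqxx.
Qed.

Definition bmp (c v : nat) := if v < c then v else v.+1.
Definition ubmp (c v : nat) := if v < c then v else v.-1.

Lemma bmp_mono c v w : (bmp c v < bmp c w) = (v < w).
Proof. by rewrite /bmp; case: (ltnP v c) => vc; case: (ltnP w c) => wc; lia. Qed.

Lemma bmp_lt c v : (bmp c v < c) = (v < c).
Proof. by rewrite /bmp; case: (ltnP v c) => vc; lia. Qed.

Lemma bmp_neq c v : bmp c v != c.
Proof. by rewrite /bmp; case: (ltnP v c) => vc; apply/eqP; lia. Qed.

Lemma ubmp_mono c v w : v != c -> w != c -> (ubmp c v < ubmp c w) = (v < w).
Proof. by move=> /eqP vc /eqP wc; rewrite /ubmp; case: (ltnP v c) => ? ; case: (ltnP w c) => ?; lia. Qed.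

Lemma bmp_ubmp c v : v != c -> bmp c (ubmp c v) = v.
Proof. by move=> /eqP vc; rewrite /ubmp; case: (ltnP v c) => h; rewrite /bmp; [rewrite h | case: ltnP => h']; lia. Qed.

Lemma bmp_inj c : injective (bmp c).
Proof.
by move=> v w; rewrite /bmp; case: (ltnP v c) => ?; case: (ltnP w c) => ?; lia.
Qed.

Lemma ms_rcons cs c :
  mallows_seq (rcons cs c) = rcons (map (bmp c) (mallows_seq cs)) c.
Proof. by rewrite /mallows_seq foldl_rcons. Qed.

Lemma size_ms cs : size (mallows_seq cs) = size cs.
Proof.
elim/last_ind: cs => [//|cs c IH].
by rewrite ms_rcons !size_rcons size_map IH.
Qed.

Lemma L1 cs : valid cs -> isperm (mallows_seq cs) /\ code (mallows_seq cs) = cs.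
Proof.
elim/last_ind: cs => [//|cs c IH] V.
have V0 : valid cs.
  move=> m mlt; have := V m; rewrite size_rcons nth_rcons mlt; apply.
  exact: ltnW.
have cle : c <= size cs.
  by have := V (size cs); rewrite size_rcons nth_rcons ltnn eqxx; apply.
have [P C] := IH V0.
have sz := size_ms cs.
rewrite ms_rcons; split.
  move: P => /andP[u /allP al]; apply/andP; split.
    rewrite rcons_uniq (map_inj_uniq (@bmp_inj c)) u andbT.
    by apply/mapP => -[v _ /eqP]; rewrite eq_sym (negbTE (bmp_neq c v)).
  rewrite size_rcons size_map all_rcons; apply/andP; split.
    by rewrite ltnS sz.
  apply/allP => w /mapP[v va ->]; have := al v va; rewrite /bmp.
  by case: (ltnP v c) => _; lia.
rewrite code_rcons code_map ?C; last by move=> v w _ _; rewrite bmp_mono.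
rewrite count_map (@eq_count _ _ (fun v => v < c)); last by move=> v; rewrite /= bmp_lt.
by rewrite count_perm_lt // sz.
Qed.

Lemma L2 n : forall s, size s = n -> isperm s -> mallows_seq (code s) = s.
Proof.
elim: n => [|n IH] s; first by case: s.
case/lastP: s => [//|s0 x] /eqP; rewrite size_rcons eqSS => /eqP sz P.
have cx : count (fun v => v < x) s0 = x.
  have : x <= size (rcons s0 x).
    by move: P => /andP[_ /allP al]; apply: ltnW; apply: al; rewrite mem_rcons mem_head.
  move/(@count_perm_lt _ x P); by rewrite -cats1 count_cat /= ltnn /= !addn0.
move: P => /andP[u /allP al]; move: u; rewrite rcons_uniq => /andP[xn u].
have ne : {in s0, forall v, v != x}.
  by move=> v vs; apply: contraNneq xn => <-.
have P' : isperm (map (ubmp x) s0).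
  apply/andP; split.
    rewrite map_inj_in_uniq // => v w vs ws.
    have := ne v vs; have := ne w ws; rewrite /ubmp => /eqP ? /eqP ?.
    by case: (ltnP v x) => ?; case: (ltnP w x) => ?; lia.
  rewrite size_map; apply/allP => w /mapP[v vs ->].
  have := al v; rewrite mem_rcons inE vs orbT size_rcons => /(_ isT).
  have := al x; rewrite mem_rcons mem_head size_rcons => /(_ isT).
  have := ne v vs; rewrite /ubmp => /eqP.
  by case: (ltnP v x) => ?; lia.
have C : code (map (ubmp x) s0) = code s0.
  by apply: code_map => v w vs ws; rewrite ubmp_mono ?ne.
rewrite code_rcons cx ms_rcons -C IH ?size_map // -map_comp map_id_in //.
by move=> v vs /=; rewrite bmp_ubmp ?ne.
Qed.

Set Implicit Arguments. Unset Strict Implicit.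

Section Comb.
Variable n : nat.

Definition sq (s : 'S_n) : seq nat := [seq val (s i) | i <- enum 'I_n].
Definition cs (c : {ffun 'I_n -> 'I_n}) : seq nat := [seq val (c m) | m <- enum 'I_n].

Lemma size_sq s : size (sq s) = n. Proof. by rewrite size_map size_enum_ord. Qed.
Lemma size_cs c : size (cs c) = n. Proof. by rewrite size_map size_enum_ord. Qed.

Lemma nth_sq s (i : 'I_n) : nth 0 (sq s) i = s i.
Proof. by rewrite (nth_map i) ?size_enum_ord // nth_ord_enum. Qed.
Lemma nth_cs c (i : 'I_n) : nth 0 (cs c) i = c i.
Proof. by rewrite (nth_map i) ?size_enum_ord // nth_ord_enum. Qed.

Lemma sq_inj : injective sq.
Proof.
move=> s t e; apply/permP => i; apply: val_inj.
by have := congr1 (fun x => nth 0 x i) e; rewrite /= !nth_sq.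
Qed.

Lemma cs_inj : injective cs.
Proof.
move=> s t e; apply/ffunP => i; apply: val_inj.
by have := congr1 (fun x => nth 0 x i) e; rewrite /= !nth_cs.
Qed.

Lemma isperm_sq s : isperm (sq s).
Proof.
apply/andP; split.
  rewrite map_inj_uniq ?enum_uniq // => i j /val_inj; exact: perm_inj.
rewrite size_sq; apply/allP => v /mapP[i _ ->]; exact: ltn_ord.
Qed.

Lemma valid_cs c : valid (cs c) <-> (forall m : 'I_n, c m <= m).
Proof.
split => [V m | H m].
  by rewrite -nth_cs; apply: V; rewrite size_cs.
rewrite size_cs => mn; have := H (Ordinal mn); by rewrite -nth_cs.
Qed.

Lemma sc_le s m : sc s m <= m.
Proof.
rewrite /sc -[X in _ <= X]card_ord -sum1_card; apply: leq_sum => j _; exact: leq_b1.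
Qed.

Definition csig (s : 'S_n) : {ffun 'I_n -> 'I_n} :=
  [ffun m : 'I_n => Ordinal (leq_ltn_trans (sc_le (sq s) m) (ltn_ord m))].

Lemma cs_csig s : cs (csig s) = code (sq s).
Proof.
rewrite /code size_sq /mkseq -val_enum_ord -map_comp /cs.
by apply: eq_map => m; rewrite ffunE.
Qed.

Lemma csig_le s (m : 'I_n) : csig s m <= m.
Proof. by rewrite ffunE sc_le. Qed.

Lemma ms_csig s : mallows_seq (cs (csig s)) = sq s.
Proof. by rewrite cs_csig (@L2 n) ?size_sq ?isperm_sq. Qed.

Lemma ms_uniq (c : {ffun 'I_n -> 'I_n}) (s : 'S_n) : (forall m : 'I_n, c m <= m) -> mallows_seq (cs c) = sq s -> c = csig s.
Proof.
move=> /valid_cs V e; apply: cs_inj.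
by rewrite cs_csig -e; case: (@L1 _ V).
Qed.

Lemma ms_exists (c : {ffun 'I_n -> 'I_n}) : (forall m : 'I_n, c m <= m) -> exists s, mallows_seq (cs c) = sq s.
Proof.
move=> /valid_cs V; have [/andP[u /allP al] _] := @L1 _ V.
set t := mallows_seq (cs c) in u al *.
have szt : size t = n by rewrite size_ms size_cs.
have tl : forall k, k < n -> nth 0 t k < n.
  by move=> k kn; have := al (nth 0 t k); rewrite szt; apply; rewrite mem_nth // szt.
have f_inj : injective (fun i : 'I_n => (insubd i (nth 0 t i) : 'I_n)).
  move=> i j /(congr1 val); rewrite !insubdK; try by apply: (tl _ (ltn_ord _)).
  by move/eqP; rewrite nth_uniq ?szt // => /eqP /val_inj.
exists (perm f_inj); rewrite /sq.
rewrite (eq_map (g := fun i : 'I_n => nth 0 t i)); last first.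
  by move=> i /=; rewrite permE insubdK //; apply: (tl _ (ltn_ord _)).
transitivity (mkseq (nth 0 t) n); first by rewrite -[X in mkseq _ X]szt mkseq_nth.
by rewrite /mkseq -val_enum_ord -map_comp.
Qed.

Definition rp : 'S_n := perm (@rev_ord_inj n).

Lemma rpE i : rp i = rev_ord i. Proof. by rewrite permE. Qed.
Lemma rprp : (rp * rp = 1)%g.
Proof. by apply/permP => i; rewrite permM !rpE perm1 rev_ordK. Qed.

Lemma card_re (T : finType) (f : T -> T) (A B : {set T}) :
  injective f -> (forall x, (f x \in A) = (x \in B)) -> #|A| = #|B|.
Proof.
move=> fi PQ; rewrite -(card_preimset _ fi); apply: eq_card => x.
by rewrite !inE PQ.
Qed.

Definition pswap (f : 'I_n -> 'I_n) (p : 'I_n * 'I_n) := (f p.2, f p.1).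
Definition pmap (f : 'I_n -> 'I_n) (p : 'I_n * 'I_n) := (f p.1, f p.2).

Lemma pswap_inj f : injective f -> injective (pswap f).
Proof. by move=> fi [a b] [c d] [/fi -> /fi ->]. Qed.
Lemma pmap_inj f : injective f -> injective (pmap f).
Proof. by move=> fi [a b] [c d] [/fi -> /fi ->]. Qed.

Lemma inv_invg (s : 'S_n) : Defs.inv (s^-1)%g = Defs.inv s.
Proof.
rewrite /Defs.inv; apply: (@card_re _ (pswap s)); first exact: pswap_inj (@perm_inj _ s).
move=> -[i j]; rewrite !inE /=.
by rewrite !permK andbC.
Qed.

Lemma rev_ltE (a b : 'I_n) : (n - a.+1 < n - b.+1) = (b < a).
Proof. by have := ltn_ord a; have := ltn_ord b; lia. Qed.

Lemma inv_conj (s : 'S_n) : Defs.inv (rp * s * rp)%g = Defs.inv s.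
Proof.
rewrite /Defs.inv; apply: (@card_re _ (pswap rp)); first exact: pswap_inj (@perm_inj _ rp).
move=> -[i j]; rewrite !inE /=.
rewrite !permM !rpE !rev_ordK /=.
by rewrite !rev_ltE.
Qed.

Definition N (s : 'S_n) : nat := \sum_(m : 'I_n) (csig s m : nat).

Lemma NE (s : 'S_n) : N s = Defs.inv (rp * s)%g.
Proof.
rewrite /Defs.inv -(@card_re _ (pmap rp) [set p : 'I_n * 'I_n | (p.2 < p.1) && (s p.2 < s p.1)]); first last.
- by move=> [i j]; rewrite !inE /= !permM !rpE /= !rev_ltE.
- exact: pmap_inj (@perm_inj _ rp).
rewrite /N; transitivity (\sum_(m : 'I_n) \sum_(j : 'I_n | (j < m) && (s j < s m)) 1).
  apply: eq_bigr => m _; rewrite ffunE /= /sc (big_ord_widen n (fun j => nat_of_bool (nth 0 (sq s) j < nth 0 (sq s) m))) ?(ltnW (ltn_ord m)) //.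
  rewrite big_mkcondr /=; apply: eq_bigr => j _; rewrite !nth_sq; by case: (s j < s m).
rewrite pair_big_dep /= sum1_card; apply: eq_card => p; by rewrite inE.
Qed.
End Comb.

Local Open Scope ring_scope.

Section Real.
Variable R : realFieldType.
Variable q : R.
Variable n : nat.

Definition W (c : {ffun 'I_n -> 'I_n}) : R :=
  \prod_(m : 'I_n) (if (c m <= m)%N then q ^+ c m else 0).
Definition D : R := \prod_(m : 'I_n) \sum_(k < (m : nat).+1) q ^+ k.

Lemma cw_W (c : {ffun 'I_n -> 'I_n}) : choice_weight q c = W c / D.
Proof.
rewrite /choice_weight /W /D -prodf_div; apply: eq_bigr => m _.
by case: ifP => _ //; rewrite mul0r.
Qed.

Lemma law_W (sigma : 'S_n) :
  mallows_law q sigma = (\sum_c W c * (mallows_seq (cs c) == sq sigma)%:R) / D.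
Proof.
rewrite /mallows_law big_distrl /=; apply: eq_bigr => c _.
by rewrite cw_W mulrAC.
Qed.

Lemma W0 (c : {ffun 'I_n -> 'I_n}) : ~~ [forall m, (c m <= m)%N] -> W c = 0.
Proof.
move=> /forallPn[m hm]; rewrite /W (bigD1 m) //= ifN //.
by rewrite mul0r.
Qed.

Lemma E1 (sigma : 'S_n) :
  \sum_c W c * (mallows_seq (cs c) == sq sigma)%:R = q ^+ N sigma.
Proof.
rewrite (bigD1 (csig sigma)) //= ms_csig eqxx mulr1 big1 ?addr0.
  rewrite /W (eq_bigr (fun m => q ^+ csig sigma m)) => [|m _]; last by rewrite csig_le.
  by rewrite prodrXr.
move=> c nc; have [V|nV] := boolP [forall m, (c m <= m)%N]; last by rewrite W0 // mul0r.
case: eqP => [e|_]; last by rewrite mulr0.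
by rewrite (ms_uniq (fun m => forallP V m) e) eqxx in nc.
Qed.

Lemma E2 : \sum_c W c = D.
Proof.
rewrite /D (eq_bigr (fun m : 'I_n => \sum_(j : 'I_n) (if (j <= m)%N then q ^+ j else 0))); last first.
  by move=> m _; rewrite (big_ord_widen n (fun k => q ^+ k)) ?ltn_ord // big_mkcond.
by rewrite bigA_distr_bigA.
Qed.

Lemma E3 : \sum_(sigma : 'S_n) \sum_c W c * (mallows_seq (cs c) == sq sigma)%:R = \sum_c W c.
Proof.
rewrite exchange_big; apply: eq_bigr => c _; rewrite -mulr_sumr.
have [V|nV] := boolP [forall m, (c m <= m)%N]; last by rewrite W0 // mul0r.
have [s0 e] := ms_exists (fun m => forallP V m).
rewrite (bigD1 s0) //= e eqxx big1 ?addr0 ?mulr1 // => t nt.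
by rewrite (inj_eq (@sq_inj n)) eq_sym (negbTE nt).
Qed.

Lemma ZD : Zmallows q n = D.
Proof.
rewrite /Zmallows (reindex_inj (mulgI (rp n))) /=.
rewrite -E2 -E3; apply: eq_bigr => s _.
by rewrite E1 NE.
Qed.

Lemma law_mu (sigma : 'S_n) : mallows_law q sigma = mu q (rp n * sigma)%g.
Proof. by rewrite law_W E1 NE /mu ZD. Qed.

End Real.

Lemma rpV n : ((rp n)^-1 = rp n)%g.
Proof. by apply/permP => i; apply: (@perm_inj _ (rp n)); rewrite permKV !rpE rev_ordK. Qed.

Lemma rprp' n : (rp n * rp n = 1)%g.
Proof. exact: rprp. Qed.

Unset Implicit Arguments.
Unset Strict Implicit.

Theorem corollary2p3 (R : realFieldType) (q : R) (hq : 0 < q) (n : nat) (hn : (1 <= n)%N)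
    (tau : 'S_n) :
  [/\ \sum_(sigma : 'S_n | [forall i, tau i == sigma (rev_ord i)]) mallows_law q sigma
        = mu q tau,
      \sum_(sigma : 'S_n | [forall i, tau i == rev_ord ((sigma^-1)%g i)]) mallows_law q sigma
        = mu q tau,
      \sum_(sigma : 'S_n | [forall i, tau i == (sigma^-1)%g (rev_ord i)]) mallows_law q sigma
        = mu q tau
    & \sum_(sigma : 'S_n | [forall i, tau i == rev_ord (sigma i)]) mallows_law q sigma
        = mu q tau].
Proof.
split.
- rewrite (eq_bigl (pred1 (rp n * tau)%g)) ?big_pred1_eq.
    by rewrite law_mu mulgA rprp mul1g.
  move=> sigma /=; apply/forallP/eqP => [H | ->].
    by apply/permP => i; rewrite permM rpE (eqP (H (rev_ord i))) rev_ordK.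
  by move=> i; rewrite permM rpE rev_ordK.
- rewrite (eq_bigl (pred1 ((tau * rp n)^-1)%g)) ?big_pred1_eq.
    by rewrite law_mu invMg rpV mulgA rprp mul1g /mu inv_invg.
  move=> sigma /=; apply/forallP/eqP => [H | ->].
    suff e : (sigma^-1 = tau * rp n)%g by rewrite -e invgK.
    by apply/permP => i; rewrite permM rpE (eqP (H i)) rev_ordK.
  by move=> i; rewrite invgK permM rpE rev_ordK.
- rewrite (eq_bigl (pred1 ((rp n * tau)^-1)%g)) ?big_pred1_eq.
    by rewrite law_mu invMg rpV mulgA /mu inv_conj inv_invg.
  move=> sigma /=; apply/forallP/eqP => [H | ->].
    suff e : (sigma^-1 = rp n * tau)%g by rewrite -e invgK.
    by apply/permP => i; rewrite permM rpE (eqP (H (rev_ord i))) rev_ordK.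
  by move=> i; rewrite invgK permM rpE rev_ordK.
- rewrite (eq_bigl (pred1 (tau * rp n)%g)) ?big_pred1_eq.
    by rewrite law_mu mulgA /mu inv_conj.
  move=> sigma /=; apply/forallP/eqP => [H | ->].
    by apply/permP => i; rewrite permM rpE (eqP (H i)) rev_ordK.
  by move=> i; rewrite permM rpE rev_ordK.
Qed.
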